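(* Let $f$ be an operation of arity $k$ defined by a set $S$ of unconditional standard rules together with an unconditional default rule $r$ of the form $f\,x_1\ldots x_k = t$, where $x_1,\dots,x_k$ are pairwise distinct variables and $t$ is an expression. Let $\mathcal T$ be a minimal definitional tree of $S$, and let $R$ be the replacement of $r$ with respect to $\mathcal T$. Then for every ground $f$-rooted pattern $p$: $p$ is reduced at the root to some $q$ by the default rule $r$ if and only if $p$ is reduced at the root to $q$ by some rule of $R$.
   Context: Programs are constructor-based, typed rewrite systems: symbols are partitioned into operations and constructors, each data type has a finite set of constructors. An $f$-rooted pattern is a linear expression $f\,\overline{t_n}$ ($f$ an operation of arity $n$) where each $t_i$ consists only of variables and constructors; it is ground if it contains no variables. A rule $l = r$ reduces an expression $e$ at the root to $\sigma(r)$ if $e = \sigma(l)$ for a substitution $\sigma$. The default rule $r$ reduces $p$ at the root (to $\sigma(t)$, where $p=\sigma(f\,\overline{x_k})$) exactly when no rule of $S$ matches $p$. A partial definitional tree with $f$-rooted pattern $p$ is either a rule node $rule(p = r)$, an exempt node $exempt(p)$, or a branch node $branch(p, x, \mathcal{T}_1,\dots,\mathcal{T}_k)$ where $x$ is a variable of $p$ (the inductive variable), $\{c_1,\dots,c_k\}$ is the set of all constructors of the type of $x$, $\sigma_i = \{x \mapsto c_i\,\overline{y_{a_i}}\}$ with fresh variables, and each $\mathcal{T}_i$ is a partial definitional tree with pattern $\sigma_i(p)$. A definitional tree of a set of rules of $f$ is a finite partial definitional tree with pattern $f\,\overline{x_n}$ ($x_i$ pairwise distinct) containing all and only those rules (up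 to renaming). It is minimal if below every branch node there is some rule node. Replacement: if $N_1,\dots,N_m$ are the exempt nodes of $\mathcal T$, $f\,\overline{t^i_k}$ the pattern of $N_i$, and $\sigma_i = \{x_1\mapsto t^i_1,\dots,x_k\mapsto t^i_k\}$, the replacement of $r$ is the set of standard rules $\{\sigma_i(f\,\overline{x_k}) = \sigma_i(t) : 1\le i\le m\}$. *)

(* Defs.v *)
From Stdlib Require Import List.
Import ListNotations.
Set Implicit Arguments.

Record signature := Signature {
  sort : Type;
  sort_eq_dec : forall s1 s2 : sort, {s1 = s2} + {s1 <> s2};
  con : Type;
  op : Type;
  con_dom : con -> list sort;
  con_rng : con -> sort;
  op_dom : op -> list sort;
  op_rng : op -> sort;
  cons_of : sort -> list con;
  cons_of_spec : forall s c, In c (cons_of s) <-> con_rng c = s;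
  cons_of_nodup : forall s, NoDup (cons_of s)
}.

Arguments con_dom {s0} _.
Arguments con_rng {s0} _.
Arguments op_dom {s0} _.
Arguments op_rng {s0} _.
Arguments cons_of {s0} _.

Section Terms.
Variable Sg : signature.

Definition var := (nat * sort Sg)%type.

Definition var_eq_dec (v w : var) : {v = w} + {v <> w}.
Proof.
  destruct v as [n s], w as [m u].
  destruct (PeanoNat.Nat.eq_dec n m) as [->|H];
    [destruct (sort_eq_dec Sg s u) as [->|H']|].
  - left; reflexivity.
  - right; intros E; inversion E; contradiction.
  - right; intros E; inversion E; contradiction.
Defined.

Inductive term :=
| Var (v : var)
| Con (c : con Sg) (args : list term)
| Op (g : op Sg) (args : list term).

Inductive has_sort : term -> sort Sg -> Prop :=
| hs_var n s : has_sort (Var (n, s)) s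
| hs_con (c : con Sg) args : Forall2 has_sort args (con_dom c) -> has_sort (Con c args) (con_rng c)
| hs_op (g : op Sg) args : Forall2 has_sort args (op_dom g) -> has_sort (Op g args) (op_rng g).

Fixpoint vars (t : term) : list var :=
  match t with
  | Var v => [v]
  | Con _ ts | Op _ ts =>
      (fix go (l : list term) : list var :=
         match l with [] => [] | u :: l' => vars u ++ go l' end) ts
  end.

Fixpoint cterm (t : term) : Prop :=
  match t with
  | Var _ => True
  | Con _ ts =>
      (fix go (l : list term) : Prop :=
         match l with [] => True | u :: l' => cterm u /\ go l' end) ts
  | Op _ _ => False
  end.

Definition subst := var -> term.

Fixpoint apply (s : subst) (t : term) : term :=
  match t with
  | Var v => s v
  | Con c ts => Con c (map (apply s) ts)
  | Op g ts => Op g (map (apply s) ts)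
  end.

Definition linear (t : term) : Prop := NoDup (vars t).
Definition ground (t : term) : Prop := vars t = [].

Definition f_pattern (f : op Sg) (p : term) : Prop :=
  exists ts, p = Op f ts /\ length ts = length (op_dom f)
             /\ Forall cterm ts /\ linear p.

Definition rule := (term * term)%type.

Definition reduces_by (rl : rule) (e q : term) : Prop :=
  exists s : subst, e = apply s (fst rl) /\ q = apply s (snd rl).

Definition matches (l e : term) : Prop := exists s : subst, e = apply s l.

Definition default_reduces (S : rule -> Prop) (f : op Sg) (xs : list var)
  (t : term) (p q : term) : Prop :=
  (~ exists rl, S rl /\ matches (fst rl) p) /\
  reduces_by (Op f (map Var xs), t) p q.

Definition variant (rl rl' : rule) : Prop :=
  exists rho : var -> var,
    (forall v, snd (rho v) = snd v) /\
    (forall v w, rho v = rho w -> v = w) /\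
    fst rl' = apply (fun v => Var (rho v)) (fst rl) /\
    snd rl' = apply (fun v => Var (rho v)) (snd rl).

Definition subst1 (x : var) (u : term) : subst :=
  fun v => if var_eq_dec v x then u else Var v.

Fixpoint subst_list (xs : list var) (ts : list term) : subst :=
  match xs, ts with
  | x :: xs', u :: ts' =>
      fun v => if var_eq_dec v x then u else subst_list xs' ts' v
  | _, _ => Var
  end.

Inductive pdt :=
| PRule (l r : term)
| PExempt (p : term)
| PBranch (p : term) (x : var) (subs : list pdt).

Inductive is_pdt : pdt -> term -> Prop :=
| ip_rule p r : is_pdt (PRule p r) p
| ip_exempt p : is_pdt (PExempt p) p
| ip_branch p x subs :
    In x (vars p) ->
    Forall2 (fun (c : con Sg) T =>
      exists ys : list var,
        map snd ys = con_dom c /\ NoDup ys /\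
        (forall y, In y ys -> ~ In y (vars p)) /\
        is_pdt T (apply (subst1 x (Con c (map Var ys))) p))
      (cons_of (snd x)) subs ->
    is_pdt (PBranch p x subs) p.

Fixpoint rules_of (T : pdt) : list rule :=
  match T with
  | PRule l r => [(l, r)]
  | PExempt _ => []
  | PBranch _ _ subs =>
      (fix go (l : list pdt) : list rule :=
         match l with [] => [] | u :: l' => rules_of u ++ go l' end) subs
  end.

Fixpoint exempts_of (T : pdt) : list term :=
  match T with
  | PRule _ _ => []
  | PExempt p => [p]
  | PBranch _ _ subs =>
      (fix go (l : list pdt) : list term :=
         match l with [] => [] | u :: l' => exempts_of u ++ go l' end) subs
  end.

Fixpoint minimal_pdt (T : pdt) : Prop :=
  match T with
  | PRule _ _ | PExempt _ => True
  | PBranch _ _ subs =>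
      rules_of T <> [] /\
      (fix go (l : list pdt) : Prop :=
         match l with [] => True | u :: l' => minimal_pdt u /\ go l' end) subs
  end.

Definition deftree_of (f : op Sg) (S : rule -> Prop) (T : pdt) : Prop :=
  (exists zs : list var, NoDup zs /\ map snd zs = op_dom f /\
     is_pdt T (Op f (map Var zs))) /\
  (forall rl, In rl (rules_of T) -> exists rl', S rl' /\ variant rl' rl) /\
  (forall rl', S rl' -> exists rl, In rl (rules_of T) /\ variant rl' rl).

Definition replacement (T : pdt) (f : op Sg) (xs : list var) (t : term)
  (rl : rule) : Prop :=
  exists ts, In (Op f ts) (exempts_of T) /\
    rl = (apply (subst_list xs ts) (Op f (map Var xs)),
          apply (subst_list xs ts) t).

End Terms.

(* Main.v *)
Require Import Defs.
From Stdlib Require Import List.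
Import ListNotations.

Fixpoint term_ind' {Sg : signature} (P : term Sg -> Prop)
  (HV : forall v, P (Var v))
  (HC : forall c ts, Forall P ts -> P (Con c ts))
  (HO : forall g ts, Forall P ts -> P (Op g ts)) (t : term Sg) : P t :=
  match t with
  | Var v => HV v
  | Con c ts => HC c ts ((fix go (l : list (term Sg)) : Forall P l :=
        match l with [] => Forall_nil _ | u :: l' => Forall_cons _ (term_ind' P HV HC HO u) (go l') end) ts)
  | Op g ts => HO g ts ((fix go (l : list (term Sg)) : Forall P l :=
        match l with [] => Forall_nil _ | u :: l' => Forall_cons _ (term_ind' P HV HC HO u) (go l') end) ts)
  end.

Fixpoint pdt_ind' {Sg : signature} (P : pdt Sg -> Prop)
  (HR : forall l r, P (PRule l r))
  (HE : forall p, P (PExempt p))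
  (HB : forall p x subs, Forall P subs -> P (PBranch p x subs)) (T : pdt Sg) : P T :=
  match T with
  | PRule l r => HR l r
  | PExempt p => HE p
  | PBranch p x subs => HB p x subs ((fix go (l : list (pdt Sg)) : Forall P l :=
        match l with [] => Forall_nil _ | u :: l' => Forall_cons _ (pdt_ind' P HR HE HB u) (go l') end) subs)
  end.

Lemma vars_Con {Sg : signature} (c : con Sg) ts : vars (Con c ts) = flat_map (@vars Sg) ts.
Proof. reflexivity. Qed.
Lemma vars_Op {Sg : signature} (c : op Sg) ts : vars (Op c ts) = flat_map (@vars Sg) ts.
Proof. reflexivity. Qed.

Lemma rules_of_branch {Sg : signature} (p : term Sg) x subs :
  rules_of (PBranch p x subs) = flat_map (@rules_of Sg) subs.
Proof. induction subs; simpl in *; [reflexivity|rewrite IHsubs; reflexivity]. Qed.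
Lemma exempts_of_branch {Sg : signature} (p : term Sg) x subs :
  exempts_of (PBranch p x subs) = flat_map (@exempts_of Sg) subs.
Proof. induction subs; simpl in *; [reflexivity|rewrite IHsubs; reflexivity]. Qed.

Lemma cterm_Con {Sg : signature} (c : con Sg) ts : cterm (Con c ts) -> Forall (@cterm Sg) ts.
Proof. induction ts; simpl; intros; auto. destruct H; constructor; auto. Qed.

Lemma apply_comp {Sg : signature} (tau th : subst Sg) u :
  apply tau (apply th u) = apply (fun v => apply tau (th v)) u.
Proof.
  induction u using term_ind'; simpl; auto; f_equal; rewrite map_map;
  apply map_ext_in; intros a Ha; rewrite Forall_forall in H; auto.
Qed.

Lemma apply_ext {Sg : signature} (s1 s2 : subst Sg) u :
  (forall v, In v (vars u) -> s1 v = s2 v) -> apply s1 u = apply s2 u.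
Proof.
  induction u using term_ind'; cbn [apply]; intros Hv.
  - apply Hv; simpl; auto.
  - f_equal; apply map_ext_in; intros a Ha; rewrite Forall_forall in H; apply H; auto.
    intros v Hin; apply Hv; rewrite vars_Con, in_flat_map; eauto.
  - f_equal; apply map_ext_in; intros a Ha; rewrite Forall_forall in H; apply H; auto.
    intros v Hin; apply Hv; rewrite vars_Op, in_flat_map; eauto.
Qed.

Lemma map_eq_in {A B} (f g : A -> B) l a : map f l = map g l -> In a l -> f a = g a.
Proof.
  induction l; simpl; intros E H; [contradiction|]. injection E; intros; destruct H; subst; auto.
Qed.

Lemma apply_agree {Sg : signature} (s1 s2 : subst Sg) u v :
  In v (vars u) -> apply s1 u = apply s2 u -> s1 v = s2 v.
Proof.
  induction u using term_ind'; cbn [apply]; intros Hin E.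
  - simpl in Hin; destruct Hin as [<-|[]]; auto.
  - rewrite vars_Con, in_flat_map in Hin; destruct Hin as [a [Ha Hv]].
    injection E; intros E'. rewrite Forall_forall in H. eapply H; eauto.
    eapply map_eq_in; eauto.
  - rewrite vars_Op, in_flat_map in Hin; destruct Hin as [a [Ha Hv]].
    injection E; intros E'. rewrite Forall_forall in H. eapply H; eauto.
    eapply map_eq_in; eauto.
Qed.

Lemma vars_apply {Sg : signature} (th : subst Sg) u v :
  In v (vars (apply th u)) -> exists w, In w (vars u) /\ In v (vars (th w)).
Proof.
  induction u using term_ind'; cbn [apply]; intros Hin.
  - exists v0; simpl; auto.
  - rewrite vars_Con, in_flat_map in Hin; destruct Hin as [a [Ha Hv]].
    apply in_map_iff in Ha; destruct Ha as [b [<- Hb]].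
    rewrite Forall_forall in H; destruct (H b Hb Hv) as [w [Hw1 Hw2]].
    exists w; split; auto; rewrite vars_Con, in_flat_map; eauto.
  - rewrite vars_Op, in_flat_map in Hin; destruct Hin as [a [Ha Hv]].
    apply in_map_iff in Ha; destruct Ha as [b [<- Hb]].
    rewrite Forall_forall in H; destruct (H b Hb Hv) as [w [Hw1 Hw2]].
    exists w; split; auto; rewrite vars_Op, in_flat_map; eauto.
Qed.

Lemma subst_list_map {Sg : signature} (xs : list (var Sg)) ts :
  NoDup xs -> length xs = length ts -> map (subst_list xs ts) xs = ts.
Proof.
  revert ts; induction xs as [|x xs IH]; intros [|u ts] Hn Hl; simpl in *; try discriminate; auto.
  inversion Hn; subst. destruct (var_eq_dec x x); [|congruence]. f_equal.
  transitivity (map (subst_list xs ts) xs); [|apply IH; auto].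
  apply map_ext_in; intros a Ha.
  destruct (var_eq_dec a x); subst; [contradiction|auto].
Qed.

Lemma subst_list_prop {Sg : signature} (Q : term Sg -> sort Sg -> Prop) (ys : list (var Sg)) args v :
  Forall2 Q args (map snd ys) -> In v ys -> Q (subst_list ys args v) (snd v).
Proof.
  revert args; induction ys as [|y ys IH]; intros [|a args] HF Hin; simpl in *; inversion HF; subst; try contradiction.
  destruct (var_eq_dec v y); subst; auto. destruct Hin; [congruence|]. auto.
Qed.

Lemma flat_map_vars_Var {Sg : signature} (ys : list (var Sg)) :
  flat_map (@vars Sg) (map (@Var Sg) ys) = ys.
Proof. induction ys; simpl; f_equal; auto. Qed.

Lemma Forall2_In_l {A B} (R : A -> B -> Prop) l1 l2 a :
  Forall2 R l1 l2 -> In a l1 -> exists b, In b l2 /\ R a b.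
Proof. induction 1; simpl; intros; [contradiction|]. destruct H1; subst; eauto.
  destruct (IHForall2 H1) as [b [? ?]]; eauto. Qed.

Lemma Forall2_combine_r {A B} (R : A -> B -> Prop) l1 l2 b :
  Forall2 R l1 l2 -> In b l2 -> exists a, In (a, b) (combine l1 l2) /\ R a b.
Proof. induction 1; simpl; intros; [contradiction|]. destruct H1; subst; eauto.
  destruct (IHForall2 H1) as [a [? ?]]; eauto. Qed.

Lemma Forall2_combine {A B} (R : A -> B -> Prop) l1 l2 a b :
  Forall2 R l1 l2 -> In (a, b) (combine l1 l2) -> R a b.
Proof. induction 1; simpl; intros; [contradiction|]. destruct H1; [injection H1; intros; subst|]; eauto. Qed.

Lemma combine_uniq {A B} (l1 : list A) (l2 : list B) a b1 b2 :
  NoDup l1 -> In (a, b1) (combine l1 l2) -> In (a, b2) (combine l1 l2) -> b1 = b2.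
Proof.
  revert l2; induction l1 as [|x l1 IH]; intros [|y l2] Hn H1 H2; simpl in *; try contradiction.
  inversion Hn; subst.
  destruct H1 as [E1|H1]; destruct H2 as [E2|H2].
  - injection E1; injection E2; intros; subst; auto.
  - injection E1; intros; subst. apply in_combine_l in H2; contradiction.
  - injection E2; intros; subst. apply in_combine_l in H1; contradiction.
  - eauto.
Qed.

Lemma apply_id {Sg : signature} (u : term Sg) : apply (@Var Sg) u = u.
Proof.
  induction u using term_ind'; cbn [apply]; auto; f_equal;
  rewrite Forall_forall in H; rewrite <- map_id; apply map_ext_in; auto.
Qed.

Lemma Forall2_impl_in {A B} (R R' : A -> B -> Prop) l1 l2 :
  Forall2 R l1 l2 -> (forall a b, In a l1 -> R a b -> R' a b) -> Forall2 R' l1 l2.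
Proof. induction 1; intros H'; constructor; simpl in *; auto. Qed.

Lemma leaf_inst {Sg : signature} (T : pdt Sg) : forall P, is_pdt T P ->
  (forall l r, In (l, r) (rules_of T) -> exists th, l = apply th P) /\
  (forall E, In E (exempts_of T) -> exists th, E = apply th P).
Proof.
  induction T as [l0 r0|p0|p0 x0 subs IH] using pdt_ind'; intros P HP; inversion HP; subst.
  - split; simpl; intros; try contradiction.
    destruct H as [Eq|[]]; injection Eq; intros; subst. exists (@Var Sg); now rewrite apply_id.
  - split; simpl; intros; try contradiction.
    destruct H as [Eq|[]]; subst. exists (@Var Sg); now rewrite apply_id.
  - rewrite rules_of_branch, exempts_of_branch. rewrite Forall_forall in IH.
    split; intros.
    + apply in_flat_map in H; destruct H as [T' [HT' Hin]].
      destruct (Forall2_combine_r _ _ _ _ H4 HT') as [c [_ [ys [_ [_ [_ Hp]]]]]].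
      destruct (proj1 (IH T' HT' _ Hp) _ _ Hin) as [th ->].
      eexists; apply apply_comp.
    + apply in_flat_map in H; destruct H as [T' [HT' Hin]].
      destruct (Forall2_combine_r _ _ _ _ H4 HT') as [c [_ [ys [_ [_ [_ Hp]]]]]].
      destruct (proj2 (IH T' HT' _ Hp) _ Hin) as [th ->].
      eexists; apply apply_comp.
Qed.

Definition gws {Sg : signature} (u : term Sg) s := cterm u /\ ground u /\ has_sort u s.

Lemma coverage {Sg : signature} (T : pdt Sg) : forall P, is_pdt T P -> forall sg : subst Sg,
  (forall v, In v (vars P) -> gws (sg v) (snd v)) ->
  (exists l r, In (l, r) (rules_of T) /\ matches l (apply sg P)) \/
  (exists E, In E (exempts_of T) /\ matches E (apply sg P)).
Proof.
  induction T as [l0 r0|p0|p0 x subs IH] using pdt_ind'; intros P HP sg Hg; inversion HP; subst.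
  - left; exists P, r0; split; simpl; auto. exists sg; auto.
  - right; exists P; split; simpl; auto. exists sg; auto.
  - rename H3 into Hx, H4 into HF. rewrite Forall_forall in IH.
    rewrite rules_of_branch, exempts_of_branch.
    destruct (Hg x Hx) as [Hc [Hgr Hs]].
    destruct (sg x) as [v|c args|g args] eqn:Ex.
    + discriminate Hgr.
    + inversion Hs; subst. rename H0 into Hsa, H2 into Hcx.
      assert (Hin : In c (cons_of (snd x))) by (apply cons_of_spec; auto).
      destruct (Forall2_In_l _ _ _ _ HF Hin) as [T' [HT' [ys [Hys [Hnd [Hdis Hp]]]]]].
      apply cterm_Con in Hc.
      assert (Hga : Forall2 gws args (map snd ys)).
      { rewrite Hys. apply (Forall2_impl_in _ _ _ _ Hsa). intros a b Ha Hab.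
        split; [rewrite Forall_forall in Hc; auto|split; auto].
        unfold ground in *. rewrite vars_Con in Hgr.
        destruct (vars a) eqn:Ev; auto. exfalso.
        assert (In v (flat_map (@vars Sg) args)) by (apply in_flat_map; exists a; rewrite Ev; simpl; auto).
        rewrite Hgr in H; contradiction. }
      assert (Hlen : length ys = length args).
      { apply Forall2_length in Hga. rewrite length_map in Hga; auto. }
      set (sg' := fun v => if in_dec (@var_eq_dec Sg) v ys then subst_list ys args v else sg v).
      assert (Heq : apply sg' (apply (subst1 x (Con c (map (@Var Sg) ys))) P) = apply sg P).
      { rewrite apply_comp. apply apply_ext. intros w Hw. unfold subst1.
        destruct (var_eq_dec w x) as [->|Hne].
        - cbn [apply]. rewrite Ex. f_equal. rewrite map_map.
          transitivity (map (subst_list ys args) ys); [|apply subst_list_map; auto].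
          apply map_ext_in; intros a Ha. cbn [apply]. unfold sg'.
          destruct in_dec; [auto|contradiction].
        - cbn [apply]. unfold sg'. destruct in_dec as [Hy|]; auto.
          exfalso; exact (Hdis _ Hy Hw). }
      rewrite <- Heq.
      assert (Hg' : forall v, In v (vars (apply (subst1 x (Con c (map (@Var Sg) ys))) P)) ->
                    gws (sg' v) (snd v)).
      { intros v Hv. destruct (vars_apply _ _ _ Hv) as [w [Hw Hvw]].
        unfold subst1 in Hvw. destruct (var_eq_dec w x) as [->|Hne].
        - rewrite vars_Con, flat_map_vars_Var in Hvw.
          unfold sg'. destruct in_dec; [|contradiction].
          apply (subst_list_prop gws); auto.
        - simpl in Hvw. destruct Hvw as [<-|[]].
          unfold sg'. destruct in_dec as [Hy|]; auto.
          exfalso; exact (Hdis _ Hy Hw). }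
      destruct (IH T' HT' _ Hp sg' Hg') as [[l [r [H1 H2]]]|[E [H1 H2]]].
      * left; exists l, r; split; auto. apply in_flat_map; eauto.
      * right; exists E; split; auto. apply in_flat_map; eauto.
    + destruct Hc.
Qed.

Lemma disjoint {Sg : signature} (T : pdt Sg) : forall P, is_pdt T P -> forall E l r p,
  In E (exempts_of T) -> In (l, r) (rules_of T) -> matches E p -> matches l p -> False.
Proof.
  induction T as [l0 r0|p0|p0 x subs IH] using pdt_ind'; intros P HP E l r p HE Hl HmE HmL;
    inversion HP; subst.
  - destruct HE.
  - destruct Hl.
  - rename H3 into Hx, H4 into HF. rewrite Forall_forall in IH.
    rewrite rules_of_branch in Hl; rewrite exempts_of_branch in HE.
    apply in_flat_map in Hl; destruct Hl as [T2 [HT2 Hl]].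
    apply in_flat_map in HE; destruct HE as [T1 [HT1 HE]].
    destruct (Forall2_combine_r _ _ _ _ HF HT1) as [c1 [Hc1 [ys1 [_ [_ [_ Hp1]]]]]].
    destruct (Forall2_combine_r _ _ _ _ HF HT2) as [c2 [Hc2 [ys2 [_ [_ [_ Hp2]]]]]].
    destruct (proj2 (leaf_inst _ _ Hp1) _ HE) as [th1 Eq1].
    destruct (proj1 (leaf_inst _ _ Hp2) _ _ Hl) as [th2 Eq2].
    assert (c1 = c2).
    { destruct HmE as [s1 Hs1]; destruct HmL as [s2 Hs2]. rewrite Eq1, !apply_comp in Hs1. rewrite Eq2, !apply_comp in Hs2.
      rewrite Hs1 in Hs2. pose proof (apply_agree _ _ _ _ Hx Hs2) as Ha.
      unfold subst1 in Ha. destruct (var_eq_dec x x); [|congruence].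
      cbn [apply] in Ha. injection Ha; auto. }
    subst c2.
    assert (T1 = T2) by (eapply combine_uniq; eauto; apply cons_of_nodup).
    subst T2.
    eapply (IH T1 HT1 _ Hp1 E l r p); eauto.
Qed.

From Stdlib Require Import ClassicalEpsilon.

Lemma match_variant_bwd {Sg : signature} (rl' rl : rule Sg) p :
  variant rl' rl -> matches (fst rl) p -> matches (fst rl') p.
Proof.
  intros [rho [_ [_ [H1 _]]]] [s Hs]. rewrite H1, apply_comp in Hs. eexists; exact Hs.
Qed.

Lemma match_variant_fwd {Sg : signature} (rl' rl : rule Sg) p :
  variant rl' rl -> matches (fst rl') p -> matches (fst rl) p.
Proof.
  intros [rho [_ [Hinj [H1 _]]]] [s Hs].
  set (tau := fun w => match excluded_middle_informative (exists v, rho v = w) with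
                       | left H => s (proj1_sig (constructive_indefinite_description _ H))
                       | right _ => Var w end).
  exists tau. rewrite H1, apply_comp, Hs. apply apply_ext. intros v _.
  cbn [apply]. unfold tau. destruct excluded_middle_informative as [H|H].
  - destruct constructive_indefinite_description as [v' Hv']; simpl.
    apply Hinj in Hv'. subst; auto.
  - exfalso; apply H; eauto.
Qed.

Lemma apply_sl_root {Sg : signature} (f : op Sg) (xs : list (var Sg)) ts :
  NoDup xs -> length xs = length ts ->
  apply (subst_list xs ts) (Op f (map (@Var Sg) xs)) = Op f ts.
Proof.
  intros Hn Hl. cbn [apply]. f_equal. rewrite map_map. exact (subst_list_map xs ts Hn Hl).
Qed.

Theorem mainTheorem5 (Sg : signature) (f : op Sg)
  (S : rule Sg -> Prop) (xs : list (var Sg)) (t : term Sg) (T : pdt Sg) :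
  (* the standard rules of S are rules of f *)
  (forall rl, S rl -> f_pattern f (fst rl)) ->
  (* default rule f x1 ... xk = t: pairwise distinct, well-sorted variables *)
  NoDup xs -> map snd xs = op_dom f ->
  has_sort t (op_rng f) ->
  (forall v, In v (vars t) -> In v xs) ->
  (* T is a minimal definitional tree of S *)
  deftree_of f S T -> minimal_pdt T ->
  forall p q : term Sg,
    f_pattern f p -> ground p -> has_sort p (op_rng f) ->
    (default_reduces S f xs t p q <->
     exists rl, replacement T f xs t rl /\ reduces_by rl p q).
Proof.
  intros Hf Hnd Hxs Ht Hvt [[zs [Hzd [Hzs HT]]] [Hto HfromS]] Hmin p q Hfp Hgp Hsp.
  assert (Hlxs : length xs = length (op_dom f)) by (rewrite <- Hxs, length_map; auto).
  assert (Hlzs : length zs = length (op_dom f)) by (rewrite <- Hzs, length_map; auto).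
  assert (Hform : forall E, In E (exempts_of T) -> exists ts', E = Op f ts' /\ length ts' = length xs).
  { intros E HE. destruct (proj2 (leaf_inst _ _ HT) _ HE) as [th ->].
    cbn [apply]. eexists; split; [reflexivity|]. rewrite !length_map. congruence. }
  split.
  - intros [HnoS [sg [Hp1 Hq1]]]. cbn [fst snd] in Hp1, Hq1.
    destruct Hfp as [args [Ep [Hla [Hca _]]]].
    assert (Hroot : apply (subst_list zs args) (Op f (map (@Var Sg) zs)) = p).
    { rewrite apply_sl_root; auto; congruence. }
    assert (Hgws : forall v, In v (vars (Op f (map (@Var Sg) zs))) ->
                   gws (subst_list zs args v) (snd v)).
    { intros v Hv. rewrite vars_Op, flat_map_vars_Var in Hv.
      apply (subst_list_prop gws); auto. rewrite Hzs.
      rewrite Ep in Hsp. inversion Hsp; subst.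
      apply (Forall2_impl_in _ _ _ _ H0). intros a b Ha Hab.
      split; [rewrite Forall_forall in Hca; auto|split; auto].
      unfold ground in *. rewrite vars_Op in Hgp.
      destruct (vars a) eqn:Ev; auto. exfalso.
      assert (In v0 (flat_map (@vars Sg) args)) by (apply in_flat_map; exists a; rewrite Ev; simpl; auto).
      rewrite Hgp in H; contradiction. }
    destruct (coverage _ _ HT _ Hgws) as [[l [r [Hin Hm]]]|[E [HE Hm]]]; rewrite Hroot in Hm.
    + exfalso. destruct (Hto _ Hin) as [rl' [HS Hv]]. apply HnoS.
      exists rl'; split; auto. eapply match_variant_bwd; eauto.
    + destruct (Hform E HE) as [ts' [-> Hl']]. destruct Hm as [tau Htau].
      exists (apply (subst_list xs ts') (Op f (map (@Var Sg) xs)), apply (subst_list xs ts') t).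
      split; [exists ts'; split; auto|].
      exists tau; cbn [fst snd]. split; [rewrite apply_sl_root; auto|].
      rewrite Hq1, apply_comp. apply apply_ext. intros v Hv. apply Hvt in Hv.
      apply (apply_agree sg (fun w => apply tau (subst_list xs ts' w)) (Op f (map (@Var Sg) xs)) v).
      * rewrite vars_Op, flat_map_vars_Var; auto.
      * rewrite <- apply_comp, apply_sl_root by auto. rewrite <- Hp1. exact Htau.
  - intros [rl [[ts' [HE ->]] [tau [Hp Hq]]]]. cbn [fst snd] in Hp, Hq.
    destruct (Hform _ HE) as [ts'' [Eq Hl']]. injection Eq; intros <-.
    split.
    + intros [rl' [HS Hm]]. destruct (HfromS _ HS) as [[l r] [Hin Hv]].
      eapply (disjoint _ _ HT (Op f ts') l r p HE Hin).
      * exists tau. rewrite Hp, apply_sl_root; auto.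
      * change l with (fst (l, r)). eapply match_variant_fwd; eauto.
    + exists (fun v => apply tau (subst_list xs ts' v)). cbn [fst snd].
      rewrite <- !apply_comp. auto.
Qed.
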